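(* Let $f_1$ and $f_2$ be polynomials (with rational coefficients in variables including $\alpha_1$ and $\alpha_l$) that are linear in $\alpha_1$, where $\alpha_l\neq\alpha_1$. For a polynomial $f$, let $lc(f)$ denote the leading coefficient of $f$ with respect to $\alpha_l$. Then either (1) $\frac{\partial\, lc(f_1)}{\partial\alpha_1}\, lc(f_2)|_{\alpha_1=0}-\frac{\partial\, lc(f_2)}{\partial\alpha_1}\, lc(f_1)|_{\alpha_1=0}=0$, or (2) $\frac{\partial\, lc(f_1)}{\partial\alpha_1}\, lc(f_2)|_{\alpha_1=0}-\frac{\partial\, lc(f_2)}{\partial\alpha_1}\, lc(f_1)|_{\alpha_1=0}= lc\!\left(\frac{\partial f_1}{\partial\alpha_1}\, f_2|_{\alpha_1=0}-\frac{\partial f_2}{\partial\alpha_1}\, f_1|_{\alpha_1=0}\right)$.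
   Context: A polynomial is linear in a variable $x$ if its degree in $x$ is at most one (it may be constant in $x$). The leading coefficient of a polynomial $f$ with respect to $\alpha_l$ is the coefficient (a polynomial in the remaining variables) of the highest power of $\alpha_l$ occurring in $f$. *)

(* Defs.v *)
From HB Require Import structures.
From mathcomp Require Import all_boot all_order all_algebra.
From mathcomp Require Import mpoly.
Set Implicit Arguments. Unset Strict Implicit. Unset Printing Implicit Defensive.
Import Order.TTheory GRing.Theory Num.Theory.
Local Open Scope ring_scope.

Section Defs.
Variables (n : nat) (R : comRingType).

(* degree of p in the variable x_l (0 for p = 0) *)
Definition mdegv (l : 'I_n) (p : {mpoly R[n]}) : nat :=
  (\max_(m <- msupp p) m l)%N.

Definition linear_in (i : 'I_n) (p : {mpoly R[n]}) : Prop :=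
  (mdegv i p <= 1)%N.

(* leading coefficient of p w.r.t. x_l: the coefficient (a polynomial in the
   remaining variables) of x_l ^ (mdegv l p) in p *)
Definition lcv (l : 'I_n) (p : {mpoly R[n]}) : {mpoly R[n]} :=
  \sum_(m <- msupp p | m l == mdegv l p)
     p@_m *: 'X_[(m - U_(l) *+ (m l))%MM].

Definition subst0 (i : 'I_n) (p : {mpoly R[n]}) : {mpoly R[n]} :=
  p \mPo [tuple if j == i then 0 else 'X_j | j < n].
End Defs.

(* Main.v *)
Require Import Defs.
From HB Require Import structures.
From mathcomp Require Import all_boot all_order all_algebra.
From mathcomp Require Import mpoly.
From mathcomp Require Import zify.
Import GRing.Theory.
Local Open Scope ring_scope.
Set Implicit Arguments. Unset Strict Implicit.

Section H.
Variables (n : nat) (R : comNzRingType) (l i : 'I_n).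
Hypothesis li : l != i.

Definition C k (p : {mpoly R[n]}) : {mpoly R[n]} :=
  \sum_(m <- msupp p | m l == k) p@_m *: 'X_[(m - U_(l) *+ (m l))%MM].

Definition hh (j : 'I_n) : {poly {mpoly R[n]}} :=
  if j == l then 'X else ('X_j)%:P.

Definition phi (p : {mpoly R[n]}) := mmap (polyC \o @mpolyC n R) hh p.

Lemma mmap1_hh m : mmap1 hh m = ('X_[(m - U_(l) *+ (m l))%MM])%:P * 'X^(m l).
Proof.
rewrite /mmap1 (bigD1 l) //= {1}/hh eqxx mulrC; congr (_ * _).
rewrite [in RHS]mpolyXE_id [in RHS](bigD1 l) //= mnmBE mulmnE mnm1E eqxx mul1n subnn expr0 mul1r.
rewrite rmorph_prod; apply: eq_bigr => j jl; rewrite /hh (negbTE jl) rmorphXn.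
by rewrite mnmBE mulmnE mnm1E eq_sym (negbTE jl) mul0n subn0.
Qed.

Lemma coef_phi p k : (phi p)`_k = C k p.
Proof.
rewrite /phi /mmap coef_sum /C [RHS]big_mkcond /=; apply: eq_bigr => m _.
rewrite mmap1_hh mulrA -polyCM coefMXn coefC.
case: (ltnP k (m l)) => h.
  by rewrite (gtn_eqF h).
rewrite subn_eq0 mul_mpolyC; case: (m l =P k) => [->|ne]; first by rewrite leqnn.
by rewrite ifN // -ltnNge ltn_neqAle h andbT; apply/eqP => e; apply: ne.
Qed.

Lemma phi_rmorph : multiplicative phi.
Proof. exact: mmap_is_multiplicative. Qed.

Lemma phiM p q : phi (p * q) = phi p * phi q.
Proof. by case: phi_rmorph => ->. Qed.
Lemma phiB p q : phi (p - q) = phi p - phi q.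
Proof. exact: mmapB. Qed.

Lemma C0 k : C k 0 = 0.
Proof. by rewrite -coef_phi /phi mmap0 coef0. Qed.
Lemma CD k p q : C k (p + q) = C k p + C k q.
Proof. by rewrite -!coef_phi /phi mmapD coefD. Qed.
Lemma CZ k c p : C k (c *: p) = c *: C k p.
Proof. by rewrite -!coef_phi /phi mmapZ /= coefCM mul_mpolyC. Qed.
Lemma CX k m : C k 'X_[m] = if m l == k then 'X_[(m - U_(l) *+ k)%MM] else 0.
Proof.
rewrite /C msuppX big_cons big_nil addr0 mcoeffX eqxx scale1r.
by case: eqP => // ->.
Qed.

Lemma mnmB_other (m : 'X_{1..n}) k : ((m - U_(l) *+ k)%MM) i = m i.
Proof. by rewrite mnmBE mulmnE mnm1E (negbTE li) mul0n subn0. Qed.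

Lemma C_mderiv k p : C k (p^`M(i)) = (C k p)^`M(i).
Proof.
elim/mpolyind: p => [|c m p _ _ IH]; first by rewrite mderiv0 C0 mderiv0.
rewrite mderivD mderivZ !CD !CZ mderivD mderivZ IH; congr (_ *: _ + _).
rewrite mderivX CZ !CX mnmBE mnm1E (eq_sym i l) (negbTE li) subn0.
case: eqP => _; last by rewrite mderiv0 scaler0.
rewrite mderivX mnmB_other; congr (_ *: 'X_[_]).
by apply/mnmP => j; rewrite !mnmBE subnAC.
Qed.

Lemma subst0X m : subst0 i ('X_[m] : {mpoly R[n]}) =
   if m i == 0%N then 'X_[m] else 0.
Proof.
rewrite /subst0 comp_mpolyX (bigD1 i) //= tnth_mktuple eqxx expr0n.
case: eqP => [mi0|]; last by rewrite mul0r.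
rewrite mul1r mpolyXE_id [RHS](bigD1 i) //= mi0 expr0 mul1r.
by apply: eq_bigr => j ji; rewrite tnth_mktuple (negbTE ji).
Qed.

Lemma subst0D (p q : {mpoly R[n]}) : subst0 i (p + q) = subst0 i p + subst0 i q.
Proof. exact: comp_mpolyD. Qed.
Lemma subst0Z c (p : {mpoly R[n]}) : subst0 i (c *: p) = c *: subst0 i p.
Proof. exact: comp_mpolyZ. Qed.
Lemma subst00 : subst0 i (0 : {mpoly R[n]}) = 0.
Proof. exact: comp_mpoly0. Qed.

Lemma C_subst0 k p : C k (subst0 i p) = subst0 i (C k p).
Proof.
elim/mpolyind: p => [|c m p _ _ IH]; first by rewrite subst00 C0 subst00.
rewrite subst0D subst0Z !CD !CZ subst0D subst0Z IH; congr (_ *: _ + _).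
rewrite subst0X CX.
case: (m i =P 0%N) => mi; case: (m l =P k) => mlk;
  rewrite ?C0 ?CX ?subst00 ?subst0X ?mnmB_other ?mi //=.
- by case: eqP.
- by rewrite ifN //; apply/eqP.
- by case: eqP.
Qed.

Lemma C_big k p : (mdegv l p < k)%N -> C k p = 0.
Proof.
move=> h; rewrite /C big1_seq // => m /andP [/eqP mlk ms].
have : (m l <= mdegv l p)%N by rewrite /mdegv; exact: (leq_bigmax_seq _ ms).
by rewrite mlk leqNgt h.
Qed.

Lemma C_coef k (p : {mpoly R[n]}) (m : 'X_{1..n}) : m l = k -> (C k p)@_(m - U_(l) *+ k)%MM = p@_m.
Proof.
move=> mlk; rewrite /C raddf_sum /=.
rewrite (eq_bigr (fun m0 => p@_m0 * (m0 == m)%:R)); last first.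
  move=> m0 /eqP m0l; rewrite mcoeffZ mcoeffX m0l; congr (_ * (_ : bool)%:R).
  apply/eqP/eqP => [h|->]; last by [].
  apply/mnmP => j; have := congr1 (fun mm : 'X_{1..n} => mm j) h.
  rewrite !mnmBE !mulmnE !mnm1E; case: (l =P j) => [<-|_]; first by rewrite m0l mlk.
  by rewrite !mul0n !subn0.
case ms: (m \in msupp p).
  rewrite big_mkcond (bigD1_seq m) ?msupp_uniq //= mlk !eqxx mulr1 big1 ?addr0 //.
  by move=> m0 /negbTE ->; rewrite mulr0 if_same.
rewrite big1_seq; last first.
  by move=> m0 /andP [_ m0s]; case: eqP => [e|]; [rewrite e ms in m0s | rewrite mulr0].
by apply/esym/eqP; rewrite mcoeff_eq0 ms.
Qed.

Lemma max_attained (s : seq 'X_{1..n}) : s != [::] ->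
  exists2 m, m \in s & (\max_(m <- s) m l)%N = m l.
Proof.
elim: s => // a s IH _; rewrite big_cons.
case: (s =P [::]) => [->|/eqP ne].
  by exists a; rewrite ?mem_head // big_nil maxn0.
have [m ms mE] := IH ne; rewrite mE.
case: (leqP (m l) (a l)) => h.
  by exists a; rewrite ?mem_head // (maxn_idPl h).
by exists m; rewrite ?in_cons ?ms ?orbT // (maxn_idPr (ltnW h)).
Qed.

Lemma C_lead p : p != 0 -> C (mdegv l p) p != 0.
Proof.
move=> pn0; have : msupp p != [::] by rewrite msupp_eq0.
move=> /max_attained [m ms mE].
apply/eqP => h; have := @C_coef _ p m (esym mE); rewrite h mcoeff0.
by move/esym/eqP; rewrite mcoeff_eq0 ms.
Qed.

End H.

Lemma coefM_top (S : nzRingType) (P Q : {poly S}) a b :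
  (size P <= a.+1)%N -> (size Q <= b.+1)%N -> (P * Q)`_(a + b) = P`_a * Q`_b.
Proof.
move=> hP hQ; rewrite coefM (bigD1 (Ordinal (leq_addr b a.+1 : a < (a + b).+1)%N)) //=.
rewrite addKn big1 ?addr0 // => [[j ltj]] /= ne.
have {}ne : j != a by apply: contra ne => /eqP e; apply/eqP/val_inj.
case: (ltnP a j) => h.
  by rewrite nth_default ?mul0r // (leq_trans hP).
rewrite [Q`_ _]nth_default ?mulr0 // (leq_trans hQ) //.
have hj : (j < a)%N by rewrite ltn_neqAle ne h.
lia.
Qed.

Lemma coefM_high (S : nzRingType) (P Q : {poly S}) a b k :
  (size P <= a.+1)%N -> (size Q <= b.+1)%N -> (a + b < k)%N -> (P * Q)`_k = 0.
Proof.
move=> hP hQ hk; rewrite nth_default // (leq_trans (size_mul_leq _ _)) //.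
rewrite (leq_trans _ hk) // -subn1 leq_subLR (leq_trans (leq_add hP hQ)) //.
by rewrite addSn addnS add1n.
Qed.

Lemma CB n (R : comNzRingType) (l : 'I_n) k (p q : {mpoly R[n]}) :
  C l k (p - q) = C l k p - C l k q.
Proof. by rewrite -!coef_phi phiB coefB. Qed.

Lemma sz_phi n (R : comNzRingType) (l : 'I_n) a (p : {mpoly R[n]}) :
  (forall j, (a < j)%N -> C l j p = 0) -> (size (phi l p) <= a.+1)%N.
Proof. by move=> h; apply/leq_sizeP => j hj; rewrite coef_phi h. Qed.

Lemma C_mul_top n (R : comNzRingType) (l : 'I_n) a b (p q : {mpoly R[n]}) :
  (forall j, (a < j)%N -> C l j p = 0) -> (forall j, (b < j)%N -> C l j q = 0) ->
  C l (a + b) (p * q) = C l a p * C l b q.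
Proof.
move=> hp hq; rewrite -!coef_phi phiM.
exact: coefM_top (sz_phi hp) (sz_phi hq).
Qed.

Lemma C_mul_high n (R : comNzRingType) (l : 'I_n) a b k (p q : {mpoly R[n]}) :
  (forall j, (a < j)%N -> C l j p = 0) -> (forall j, (b < j)%N -> C l j q = 0) ->
  (a + b < k)%N -> C l k (p * q) = 0.
Proof.
move=> hp hq hk; rewrite -!coef_phi phiM.
exact: coefM_high (sz_phi hp) (sz_phi hq) hk.
Qed.

Lemma lcvE n (R : comNzRingType) l (p : {mpoly R[n]}) : lcv l p = C l (mdegv l p) p.
Proof. by []. Qed.

Lemma generic (R : comNzRingType) (n : nat) (i l : 'I_n) (f1 f2 : {mpoly R[n]}) :
  l != i -> linear_in i f1 -> linear_in i f2 ->
  let D := (lcv l f1)^`M(i) * subst0 i (lcv l f2)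
           - (lcv l f2)^`M(i) * subst0 i (lcv l f1) in
  D = 0 \/ D = lcv l (f1^`M(i) * subst0 i f2 - f2^`M(i) * subst0 i f1).
Proof.
move=> li _ _ D.
have hD : D = (lcv l f1)^`M(i) * subst0 i (lcv l f2)
           - (lcv l f2)^`M(i) * subst0 i (lcv l f1) by [].
clearbody D.
have [E hE] : {E | E = f1^`M(i) * subst0 i f2 - f2^`M(i) * subst0 i f1} by eexists.
rewrite -hE.
have hd (f : {mpoly R[n]}) j : (mdegv l f < j)%N -> C l j (f^`M(i)) = 0.
  by move=> hj; rewrite (C_mderiv li) C_big ?mderiv0.
have hs (f : {mpoly R[n]}) j : (mdegv l f < j)%N -> C l j (subst0 i f) = 0.
  by move=> hj; rewrite (C_subst0 li) C_big ?subst00.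
have key : C l (mdegv l f1 + mdegv l f2)%N E = D.
  rewrite hE CB (C_mul_top (hd f1) (hs f2)) addnC (C_mul_top (hd f2) (hs f1)).
  by rewrite hD !lcvE !(C_mderiv li) !(C_subst0 li).
have high j : (mdegv l f1 + mdegv l f2 < j)%N -> C l j E = 0.
  move=> hj; rewrite hE CB (C_mul_high (hd f1) (hs f2) hj).
  by rewrite (C_mul_high (hd f2) (hs f1)) ?subrr // addnC.
have [D0|DnZ] := eqVneq D 0; [by left | right].
have En0 : E != 0.
  by apply: contra DnZ => /eqP E0; rewrite -key E0 C0.
have dE : mdegv l E = (mdegv l f1 + mdegv l f2)%N.
  apply/eqP; rewrite eqn_leq; apply/andP; split.
    rewrite leqNgt; apply/negP => h; have := C_lead l En0; by rewrite high ?eqxx.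
  rewrite leqNgt; apply/negP => h; move: DnZ; by rewrite -key C_big ?eqxx.
by rewrite lcvE dE key.
Qed.

Theorem lemma3p6 (n : nat) (i l : 'I_n) (f1 f2 : {mpoly rat[n]}) :
  l != i -> linear_in i f1 -> linear_in i f2 ->
  let D := (lcv l f1)^`M(i) * subst0 i (lcv l f2)
           - (lcv l f2)^`M(i) * subst0 i (lcv l f1) in
  D = 0 \/ D = lcv l (f1^`M(i) * subst0 i f2 - f2^`M(i) * subst0 i f1).
Proof. exact: generic. Qed.
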